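(* For integers $d,k\ge0$ let $E'_k(d)=\sum_{i=0}^k\binom{k}{i}E_i(d)(-\tfrac d2)^{k-i}$. Then: (1) for all integers $a,b,k\ge0$, $E'_k(a+b+2)=\sum_{i+j=k}\binom{k}{i}E'_i(a)E'_j(b)$; (2) $\displaystyle\sum_{k\ge0}E'_k(d)\frac{z^k}{k!}=\Bigg(\sum_{t\ge0}\frac{z^{2t}}{4^t(2t+1)!}\Bigg)^{d+2}$; (3) when $d\ge k-1$, $E'_k(d)=\mathbb{E}\big[(\mathcal{X}_d-\tfrac d2)^k\big]$.
   Context: $\mathcal{X}_d$ is the number of descents of a uniformly random permutation of $\{1,\dots,d+1\}$. For each $k\ge0$, $E_k(d)\in\mathbb{Q}[d]$ is the polynomial of degree $k$ determined by $\sum_{k\ge0}\frac{E_k(d)}{k!}z^k=\big(\frac{e^z-1}{z}\big)^{d+2}e^{-z}$; it satisfies $E_k(d)=\mathbb{E}[\mathcal{X}_d^k]$ for all integers $d\ge\max(k-1,0)$. *)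

(* Defs.v *)
From mathcomp Require Import all_boot all_order all_algebra all_fingroup.
Set Implicit Arguments. Unset Strict Implicit. Unset Printing Implicit Defensive.
Import Order.TTheory GRing.Theory Num.Theory.
Local Open Scope ring_scope.

(* Formal power series over rat, represented by their coefficient sequences. *)
Definition sprod (f g : nat -> rat) (n : nat) : rat :=
  \sum_(i < n.+1) f i * g (n - i)%N.

Definition sone : nat -> rat := fun n => (n == 0%N)%:R.

Definition spow (f : nat -> rat) (m : nat) : nat -> rat := iter m (sprod f) sone.

Definition expm1_div_z : nat -> rat := fun n => 1 / (n.+1)`!%:R.

Definition exp_neg : nat -> rat := fun n => (-1) ^+ n / n`!%:R.

Definition Epoly (k d : nat) : rat :=
  k`!%:R * sprod (spow expm1_div_z (d + 2)) exp_neg k.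

Definition Eprime (k d : nat) : rat :=
  \sum_(i < k.+1) 'C(k, i)%:R * Epoly i d * (- (d%:R / 2)) ^+ (k - i).

(* sum_{t>=0} z^{2t} / (4^t (2t+1)!) *)
Definition sinhc_half : nat -> rat := fun n =>
  if odd n then 0 else 1 / ((4 ^ n./2)%:R * (n.+1)`!%:R).

(* number of descents of a permutation s of {0,...,d}:
   positions i < d with s(i) > s(i+1) *)
Definition descents (d : nat) (s : 'S_d.+1) : nat :=
  #|[set i : 'I_d | (nat_of_ord (s (lift ord0 i)) < nat_of_ord (s (widen_ord (leqnSn d) i)))%N]|.

(* E[(X_d - d/2)^k] for X_d = descents of a uniform random permutation of {1..d+1} *)
Definition centered_moment (d k : nat) : rat :=
  (\sum_(s : 'S_d.+1) ((descents s)%:R - d%:R / 2) ^+ k) / (d.+1)`!%:R.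

(* Main.v *)
Require Import Defs.
From mathcomp Require Import all_boot all_order all_algebra all_fingroup.
From mathcomp Require Import ring lra zify.
Import Order.TTheory GRing.Theory Num.Theory.
Local Open Scope ring_scope.

Definition eqm (N : nat) (p q : {poly rat}) := forall k, (k < N)%N -> p`_k = q`_k.

Lemma eqm_refl N p : eqm N p p. Proof. by []. Qed.
Lemma eqm_sym N p q : eqm N p q -> eqm N q p.
Proof. by move=> h k hk; rewrite h. Qed.
Lemma eqm_trans N p q r : eqm N p q -> eqm N q r -> eqm N p r.
Proof. by move=> h1 h2 k hk; rewrite h1 // h2. Qed.
Lemma eqm_le M N p q : (M <= N)%N -> eqm N p q -> eqm M p q.
Proof. by move=> hMN h k hk; apply: h; apply: leq_trans hk hMN. Qed.
Lemma eqmD N p p' q q' : eqm N p p' -> eqm N q q' -> eqm N (p + q) (p' + q').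
Proof. by move=> h1 h2 k hk; rewrite !coefD h1 // h2. Qed.
Lemma eqmB N p p' q q' : eqm N p p' -> eqm N q q' -> eqm N (p - q) (p' - q').
Proof. by move=> h1 h2 k hk; rewrite !coefB h1 // h2. Qed.
Lemma eqmM N p p' q q' : eqm N p p' -> eqm N q q' -> eqm N (p * q) (p' * q').
Proof.
move=> h1 h2 k hk; rewrite !coefM; apply: eq_bigr => i _.
have hi : (i < N)%N by rewrite (leq_ltn_trans _ hk) // -ltnS.
have hki : (k - i < N)%N by rewrite (leq_ltn_trans _ hk) // leq_subr.
by rewrite h1 // h2.
Qed.
Lemma eqmX N p q m : eqm N p q -> eqm N (p ^+ m) (q ^+ m).
Proof.
move=> h; elim: m => [|m IH]; first by rewrite !expr0.
by rewrite !exprS; apply: eqmM.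
Qed.
Lemma eqm_deriv N p q : eqm N.+1 p q -> eqm N p^`() q^`().
Proof. by move=> h k hk; rewrite !coef_deriv h. Qed.
Lemma eqm_sum N (I : Type) (r : seq I) (F G : I -> {poly rat}) :
  (forall i, eqm N (F i) (G i)) -> eqm N (\sum_(i <- r) F i) (\sum_(i <- r) G i).
Proof. by move=> h k hk; rewrite !coef_sum; apply: eq_bigr => i _; apply: h. Qed.

Arguments eqm_sym {N p q}.
Arguments eqm_trans {N p q r}.
Arguments eqm_le {M N p q}.
Arguments eqmD {N p p' q q'}.
Arguments eqmB {N p p' q q'}.
Arguments eqmM {N p p' q q'}.
Arguments eqmX {N p q}.
Arguments eqm_deriv {N p q}.

Lemma eqm0X N p : eqm N p 0 <-> exists q, p = 'X^N * q.
Proof.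
split.
  move=> h; exists (\poly_(i < size p) p`_(i + N)).
  apply/polyP => k; rewrite coefXnM coef_poly.
  case: ltnP => hk; first by rewrite h // coef0.
  case: ltnP => hs; first by rewrite subnK.
  rewrite nth_default //; apply: leq_trans hs _; exact: leq_subr.
by case=> q -> k hk; rewrite coefXnM hk coef0.
Qed.

Definition T N (f : nat -> rat) : {poly rat} := \poly_(i < N) f i.
Definition Ep N (c : rat) : {poly rat} := T N (fun i => c ^+ i / i`!%:R).

Lemma sprod_poly N f g (p q : {poly rat}) k :
  (forall j, (j < N)%N -> f j = p`_j) -> (forall j, (j < N)%N -> g j = q`_j) ->
  (k < N)%N -> sprod f g k = (p * q)`_k.
Proof.
move=> hf hg hk; rewrite /sprod coefM; apply: eq_bigr => i _.
have hi : (i < N)%N by rewrite (leq_ltn_trans _ hk) // -ltnS.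
have hki : (k - i < N)%N by rewrite (leq_ltn_trans _ hk) // leq_subr.
by rewrite hf // hg.
Qed.

Lemma spow_poly N f m k : (k < N)%N -> spow f m k = (T N f ^+ m)`_k.
Proof.
elim: m k => [|m IH] k hk; first by rewrite /spow /= /sone expr0 coef1.
rewrite /spow iterS -/(spow f m) exprS.
by apply: (@sprod_poly N) => // j hj; rewrite ?coef_poly ?hj ?IH.
Qed.

Lemma fact_neq0 n : (n`!%:R : rat) != 0.
Proof. by rewrite pnatr_eq0 -lt0n fact_gt0. Qed.

Lemma binq k i : (i <= k)%N ->
  ('C(k, i)%:R : rat) = k`!%:R / (i`!%:R * (k - i)`!%:R).
Proof.
move=> hik; rewrite -(bin_fact hik) !natrM mulfK //.
by rewrite mulf_neq0 // fact_neq0.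
Qed.

Lemma coef_Ep N c k : (Ep N c)`_k = if (k < N)%N then c ^+ k / k`!%:R else 0.
Proof. by rewrite coef_poly. Qed.

Lemma Ep_mul N a b : eqm N (Ep N a * Ep N b) (Ep N (a + b)).
Proof.
move=> k hk; rewrite coefM coef_Ep hk addrC exprDn mulr_suml.
apply: eq_bigr => i _.
have hi : (i < N)%N by rewrite (leq_ltn_trans _ hk) // -ltnS.
have hki : (k - i < N)%N by rewrite (leq_ltn_trans _ hk) // leq_subr.
rewrite !coef_Ep hi hki -[_ *+ 'C(k, i)]mulr_natr binq; last by rewrite -ltnS.
have := fact_neq0 i; have := fact_neq0 (k - i); have := fact_neq0 k.
move=> h1 h2 h3; field.
by rewrite h1 h2 h3.
Qed.

Lemma Ep_deriv N c : eqm N.-1 (Ep N c)^`() (c%:P * Ep N c).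
Proof.
move=> k hk; rewrite coef_deriv coefCM !coef_Ep.
have hk1 : (k.+1 < N)%N by case: N hk => [|N] //.
rewrite hk1 (ltn_trans _ hk1) // factS natrM exprS -mulr_natr.
have := fact_neq0 k => h; field.
have hk0 : (0:rat) <= k%:R := ler0n _ _.
by rewrite h /= lt0r_neq0 //; lra.
Qed.

Lemma Ep0 N : eqm N (Ep N 0) 1.
Proof.
move=> k hk; rewrite coef_Ep hk coef1 expr0n; case: k {hk} => /= [|k].
  by rewrite fact0 mulr1n divr1.
by rewrite mul0r.
Qed.

Lemma Ep_pow N c m : eqm N (Ep N c ^+ m) (Ep N (m%:R * c)).
Proof.
elim: m => [|m IH]; first by rewrite expr0 mul0r; apply: eqm_sym; apply: Ep0.
rewrite exprS; apply: eqm_trans (eqmM (eqm_refl _ _) IH) _.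
apply: eqm_trans (Ep_mul _ _ _) _.
by rewrite -[m.+1]addn1 natrD; have -> : c + m%:R * c = (m%:R + 1%:R) * c by ring.
Qed.

Definition U N := T N expm1_div_z.
Definition F N := T N exp_neg.
Definition E1 N := 1 + 'X * U N.

Lemma F_Ep N : F N = Ep N (-1).
Proof. by []. Qed.

Lemma E1_Ep N : eqm N (E1 N) (Ep N 1).
Proof.
move=> k hk; rewrite coefD coef1 coefXM coef_Ep hk expr1n; case: k hk => [|k] hk /=.
  by rewrite addr0 fact0 mulr1n divr1.
by rewrite add0r /U /T coef_poly (ltnW hk).
Qed.

Lemma XU' N : eqm N ('X * (U N)^`()) (E1 N - U N).
Proof.
move=> k hk; rewrite coefB coefD coef1 !coefXM coef_deriv /U /T !coef_poly.
case: k hk => [|k] hk /=.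
  by rewrite hk /expm1_div_z (factS 0) fact0 muln1 addr0 mulr1n divr1 subrr.
rewrite hk (ltnW hk) /expm1_div_z add0r -mulr_natr (factS k.+1) natrM.
have := fact_neq0 k.+1 => h.
have hk0 : (0:rat) <= k%:R := ler0n _ _.
field; rewrite h /= lt0r_neq0 //; lra.
Qed.

Lemma sum_binom (x : rat) k :
  \sum_(i < k.+1) 1 / (i.+1)`!%:R * (x ^+ (k - i) / (k - i)`!%:R) =
  ((x + 1) ^+ k.+1 - x ^+ k.+1) / (k.+1)`!%:R.
Proof.
rewrite exprDn [X in _ = (X - _) / _]big_ord_recl /=.
rewrite subn0 expr0 mulr1 bin0 mulr1n addrAC subrr add0r mulr_suml.
apply: eq_bigr => i _; rewrite /bump /= add1n expr1n mulr1 subSS -[_ *+ 'C(_, _)]mulr_natr binq // subSS.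
have := fact_neq0 i.+1; have := fact_neq0 (k - i); have := fact_neq0 k.+1.
move=> h1 h2 h3; field.
by rewrite h1 h2 h3.
Qed.

Lemma sinh_coef N : eqm N (U N * Ep N (- 2^-1)) (T N sinhc_half).
Proof.
move=> k hk; rewrite coef_poly hk coefM.
transitivity (\sum_(i < k.+1) 1 / (i.+1)`!%:R * ((- 2^-1 : rat) ^+ (k - i) / (k - i)`!%:R)).
  apply: eq_bigr => i _.
  have hi : (i < N)%N by rewrite (leq_ltn_trans _ hk) // -ltnS.
  have hki : (k - i < N)%N by rewrite (leq_ltn_trans _ hk) // leq_subr.
  by rewrite /U /T coef_poly hi coef_Ep hki.
rewrite sum_binom.
have -> : - 2^-1 + 1 = 2^-1 :> rat by field.
rewrite exprNn -signr_odd /= /sinhc_half; case ok: (odd k) => /=.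
  by rewrite expr0 mul1r subrr mul0r.
have hk2 : k = (k./2 * 2)%N by rewrite muln2 -[k in LHS]odd_double_half ok.
rewrite natrX.
have e : (2^-1 : rat) ^+ k = (4%:R ^+ k./2)^-1.
  rewrite {1}hk2 exprM exprAC -exprVn; congr (_ ^+ _).
rewrite exprS e expr1.
have := fact_neq0 k.+1 => h.
field.
by rewrite h /= expf_neq0.
Qed.

Lemma Epoly_poly N k d : (k < N)%N -> Epoly k d = k`!%:R * (U N ^+ (d + 2) * F N)`_k.
Proof.
move=> hk; rewrite /Epoly; congr (_ * _); apply: (@sprod_poly N) => // j hj.
  exact: spow_poly.
by rewrite /F /T coef_poly hj.
Qed.

Lemma part2 d k : Eprime k d / k`!%:R = spow sinhc_half (d + 2) k.
Proof.
pose N := k.+1; have hk : (k < N)%N by [].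
rewrite (@spow_poly N _ _ _ hk).
transitivity ((U N ^+ (d + 2) * F N * Ep N (- (d%:R / 2)))`_k).
  rewrite /Eprime mulr_suml coefM; apply: eq_bigr => i _.
  have hi : (i < N)%N by rewrite (leq_ltn_trans _ hk) // -ltnS.
  have hki : (k - i < N)%N by rewrite (leq_ltn_trans _ hk) // leq_subr.
  rewrite (@Epoly_poly N i d hi) coef_Ep hki binq; last by rewrite -ltnS.
  have := fact_neq0 i; have := fact_neq0 (k - i); have := fact_neq0 k.
  move=> h1 h2 h3; field.
  by rewrite h1 h2 h3.
have : eqm N (U N ^+ (d + 2) * F N * Ep N (- (d%:R / 2))) (T N sinhc_half ^+ (d + 2)).
  apply: eqm_trans (_ : eqm N _ ((U N * Ep N (- 2^-1)) ^+ (d + 2))) _; last first.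
    exact: eqmX (sinh_coef N).
  rewrite exprMn -mulrA; apply: eqmM (eqm_refl _ _) _.
  rewrite F_Ep; apply: eqm_trans (Ep_mul _ _ _) _.
  apply: eqm_sym; apply: eqm_trans (Ep_pow _ _ _) _.
  have -> : (d + 2)%N%:R * - 2^-1 = -1 + - (d%:R / 2) :> rat.
    by rewrite natrD; field.
  exact: eqm_refl.
by move/(_ k hk).
Qed.

Lemma Eprime_spow k d : Eprime k d = k`!%:R * spow sinhc_half (d + 2) k.
Proof. by rewrite -part2 mulrC divfK // fact_neq0. Qed.

Lemma part1 a b k : Eprime k (a + b + 2) =
  \sum_(i < k.+1) 'C(k, i)%:R * Eprime i a * Eprime (k - i) b.
Proof.
pose N := k.+1; have hk : (k < N)%N by [].
have -> : \sum_(i < k.+1) 'C(k, i)%:R * Eprime i a * Eprime (k - i) b =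
   k`!%:R * sprod (spow sinhc_half (a + 2)) (spow sinhc_half (b + 2)) k.
  rewrite /sprod mulr_sumr; apply: eq_bigr => i _.
  rewrite !Eprime_spow binq; last by rewrite -ltnS.
  have := fact_neq0 i; have := fact_neq0 (k - i); have := fact_neq0 k.
  move=> h1 h2 h3; field.
  by rewrite h2 h3.
rewrite Eprime_spow; congr (_ * _).
rewrite (@spow_poly N _ _ _ hk) (@sprod_poly N _ _ (T N sinhc_half ^+ (a + 2)) (T N sinhc_half ^+ (b + 2))) => //;
  try by move=> j hj; exact: spow_poly.
rewrite -exprD; have -> : (a + b + 2 + 2 = (a + 2) + (b + 2))%N by lia.
by [].
Qed.

Section Comb.
Local Open Scope nat_scope.

Fixpoint desl (l : seq nat) : nat :=
  if l is x :: t then (if t is y :: _ then (y < x) else false) + desl t else 0.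

Definition ins (p x : nat) (l : seq nat) := take p l ++ x :: drop p l.

Definition inc (p : nat) (l : seq nat) : bool :=
  if p is p'.+1 then (p < size l) && (nth 0 l p' < nth 0 l p) else (0 < size l).

Lemma des_ins x l p : uniq l -> (forall y, y \in l -> y < x) -> p <= size l ->
  desl (ins p x l) = desl l + inc p l.
Proof.
elim: l p => [|y l IH] p /=; first by case: p.
case/andP=> yl ul hx.
case: p => [|p] hp.
  rewrite /ins /= (hx y) ?mem_head //; case: l {IH yl ul hx hp} => [|z l] /=; lia.
have hx' : forall z, z \in l -> z < x by move=> z hz; apply: hx; rewrite in_cons hz orbT.
rewrite /ins /= -/(ins p x l).
case: p hp => [|p] hp.
  rewrite /ins take0 drop0 /=.
  have hyx : (x < y) = false.
    by apply/negbTE; rewrite -leqNgt ltnW // hx // mem_head.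
  rewrite hyx add0n.
  case: l IH yl ul hx hx' hp => [|z l] IH yl ul hx hx' hp //=.
  rewrite hx' ?mem_head //.
  have : y != z by move: yl; rewrite in_cons negb_or => /andP[].
  by case: ltngtP => //; lia.
case: l IH yl ul hx hx' hp => [|z l] IH yl ul hx hx' hp //=.
have := IH p.+1 ul hx' hp; rewrite /ins /= => ->.
by rewrite !addnA.
Qed.

Lemma cnt_des l : uniq l -> \sum_(p < (size l).+1) inc p l + desl l = size l.
Proof.
elim: l => [|y l IH] /=; first by rewrite big_ord1.
case/andP=> yl ul; have := IH ul.
move=> h; rewrite big_ord_recl in h; rewrite big_ord_recl big_ord_recl.
have -> : \sum_(i < size l) inc (lift ord0 (lift ord0 i)) (y :: l) =
          \sum_(i < size l) inc (lift ord0 i) l.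
  by apply: eq_bigr => i _; rewrite !lift0.
move: h; case: l IH yl ul => [|z l] IH yl ul /=.
  by rewrite big_ord0.
have : y != z by move: yl; rewrite in_cons negb_or => /andP[].
case: ltngtP => // _ _; lia.
Qed.

Lemma sum_ins (V : zmodType) (f : nat -> V) x l : uniq l -> (forall y, y \in l -> y < x) ->
  (\sum_(p < (size l).+1) f (desl (ins p x l)) =
   f (desl l) *+ (desl l).+1 + f (desl l).+1 *+ (size l - desl l))%R.
Proof.
move=> ul hx.
have e : forall p : 'I_(size l).+1, f (desl (ins p x l)) =
    (f (desl l) + (f (desl l).+1 - f (desl l)) *+ inc p l)%R.
  move=> p; rewrite des_ins //; last by rewrite -ltnS.
  case: (inc p l) => /=; first by rewrite addn1 mulr1n addrC subrK.
  by rewrite addn0 mulr0n addr0.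
rewrite (eq_bigr _ (fun p _ => e p)) big_split /= sumr_const card_ord sumrMnr.
have hc := @cnt_des l ul.
have -> : \sum_(i < (size l).+1) inc i l = size l - desl l by lia.
have -> : (size l).+1 = (desl l).+1 + (size l - desl l) by lia.
rewrite mulrnBl mulrnDr -addrA; congr (_ + _)%R.
by rewrite addrC subrK.
Qed.

Fixpoint perms (n : nat) : seq (seq nat) :=
  if n is n'.+1 then [seq ins p n' l | l <- perms n', p <- iota 0 n] else [:: [::]].

Lemma permsS n : perms n.+1 = [seq ins p n l | l <- perms n, p <- iota 0 n.+1].
Proof. by []. Qed.

Lemma ins_perm p x l : perm_eq (ins p x l) (x :: l).
Proof.
by rewrite /ins -[x :: drop p l]/([:: x] ++ drop p l) perm_catCA /= cat_take_drop.
Qed.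

Lemma iotaS n : perm_eq (iota 0 n.+1) (n :: iota 0 n).
Proof. by rewrite -addn1 iotaD add0n perm_catC. Qed.

Lemma perms_perm n l : l \in perms n -> perm_eq l (iota 0 n).
Proof.
elim: n l => [|n IH] l; first by rewrite inE => /eqP ->.
rewrite permsS; case/allpairsP => [[l0 p] [/= hl0 _ ->]].
apply: perm_trans (ins_perm _ _ _) _.
have h := iotaS n; rewrite perm_sym in h.
by apply: perm_trans _ h; rewrite perm_cons; apply: IH.
Qed.

Lemma perms_prop n l : l \in perms n ->
  [/\ uniq l, size l = n & forall y, y \in l -> y < n].
Proof.
move/perms_perm=> h; split.
- by rewrite (perm_uniq h) iota_uniq.
- by rewrite (perm_size h) size_iota.
- by move=> y; rewrite (perm_mem h) mem_iota.
Qed.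

Lemma ins_index p x l : x \notin l -> p <= size l -> index x (ins p x l) = p.
Proof.
move=> hx hp; rewrite /ins index_cat.
have -> : (x \in take p l) = false.
  by apply/negbTE; apply: contra hx; apply: mem_take.
by rewrite /= eqxx addn0 size_takel.
Qed.

Lemma ins_inv p x l : p <= size l -> take p (ins p x l) ++ drop p.+1 (ins p x l) = l.
Proof.
move=> hp; rewrite /ins take_size_cat ?size_takel // drop_cat size_takel //.
by rewrite ltnNge leqnSn /= subSnn /= drop0 cat_take_drop.
Qed.

Lemma perms_uniq n : uniq (perms n).
Proof.
elim: n => [|n IH] //.
rewrite permsS; apply: allpairs_uniq => //; first exact: iota_uniq.
move=> [a b] [a' b'] h1 h2.
move: h1 => /allpairsP [[x0 y0] [/= ha hb e1]]; case: e1 => -> ->.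
move: h2 => /allpairsP [[x1 y1] [/= ha' hb' e1]]; case: e1 => -> -> /= e.
clear a b a' b'; move: x0 y0 x1 y1 ha hb ha' hb' e => a b a' b' ha hb ha' hb' e.

have [_ s1 m1] := @perms_prop _ _ ha; have [_ s2 m2] := @perms_prop _ _ ha'.
have n1 : n \notin a by apply/negP => /m1; rewrite ltnn.
have n2 : n \notin a' by apply/negP => /m2; rewrite ltnn.
have {}hb : b <= n.
  by move: hb; rewrite inE mem_iota; case/orP => [/eqP -> //|]; lia.
have {}hb' : b' <= n.
  by move: hb'; rewrite inE mem_iota; case/orP => [/eqP -> //|]; lia.
have eb : b = b'.
  by rewrite -(@ins_index b n a n1) ?s1 // e (@ins_index b' n a') ?s2.
subst b'.
by rewrite -(@ins_inv b n a) ?s1 // e (@ins_inv b n a') ?s2.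
Qed.

Lemma size_perms n : size (perms n) = n`!.
Proof. by elim: n => [|n IH] //; rewrite permsS size_allpairs size_iota IH factS mulnC. Qed.

Lemma perms_mem n l : perm_eq l (iota 0 n) -> l \in perms n.
Proof.
elim: n l => [|n IH] l hl.
  case: l hl => [|z l] hl; first by rewrite inE eqxx.
  by have := perm_size hl; rewrite size_iota.
have hn : n \in l by rewrite (perm_mem hl) mem_iota leq0n add0n ltnSn.
have hs : size l = n.+1 by rewrite (perm_size hl) size_iota.
pose p := index n l.
have hp : p < size l by rewrite index_mem.
pose l0 := take p l ++ drop p.+1 l.
have hpl : size (take p l) = p by rewrite size_takel // ltnW.
have el : l = ins p n l0.
  rewrite /ins /l0 take_size_cat // drop_size_cat //.
  by rewrite -{1}(cat_take_drop p l) (drop_nth n hp) nth_index.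
rewrite el permsS; apply: allpairs_f; last by rewrite mem_iota add0n -hs.
apply: IH; rewrite -(perm_cons n).
have h1 := ins_perm p n l0; rewrite -el perm_sym in h1.
exact: perm_trans h1 (perm_trans hl (iotaS n)).
Qed.

Definition lst n (s : 'S_n) : seq nat := [seq val (s i) | i <- enum 'I_n].
Arguments lst {n}.

Lemma nth_lst n (s : 'S_n) (i : 'I_n) : nth 0 (lst s) i = s i.
Proof. by rewrite /lst (nth_map i) ?size_enum_ord // nth_ord_enum. Qed.

Arguments nth_lst {n}.

Lemma lst_inj n : injective (@lst n).
Proof.
move=> s t e; apply/permP => i; have h := nth_lst s i; rewrite e nth_lst in h.
by apply: val_inj; rewrite /= h.
Qed.

Lemma lst_perm n (s : 'S_n) : perm_eq (lst s) (iota 0 n).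
Proof.
have -> : lst s = map val (map s (enum 'I_n)) by rewrite -map_comp.
rewrite -val_enum_ord; apply: perm_map.
apply: uniq_perm; first by rewrite (map_inj_uniq (@perm_inj _ s)) enum_uniq.
  exact: enum_uniq.
move=> i; rewrite mem_enum; apply/mapP; exists (s^-1 i)%g; first by rewrite mem_enum.
by rewrite permKV.
Qed.

Arguments lst_perm {n}.

Lemma desl_sum l : desl l = \sum_(i < (size l).-1) (nth 0 l i.+1 < nth 0 l i).
Proof.
elim: l => [|x t IH]; first by rewrite big_ord0.
case: t IH => [|y t] IH; first by rewrite big_ord0.
have -> : desl [:: x, y & t] = (y < x) + desl (y :: t) by [].
rewrite IH big_ord_recl; congr (_ + _); apply: eq_bigr => i _; by rewrite lift0.
Qed.

Lemma descents_lst d (s : 'S_d.+1) : descents s = desl (lst s).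
Proof.
rewrite /descents desl_sum /lst size_map size_enum_ord /= -/(lst s).
rewrite -sum1_card big_mkcond /=; apply: eq_bigr => i _.
have h1 := nth_lst s (lift ord0 i); rewrite lift0 in h1.
have h2 := nth_lst s (widen_ord (leqnSn d) i); rewrite /= in h2.
by rewrite inE h1 h2; case: ifP.
Qed.

Lemma size_index_enum_perm n : size (index_enum {perm 'I_n}) = n`!.
Proof.
by rewrite -card_Sn cardE -deprecated_filter_index_enum (@eq_filter _ _ predT) ?filter_predT.
Qed.

Lemma sum_S (V : zmodType) d (g : nat -> V) :
  (\sum_(s : 'S_d.+1) g (descents s) = \sum_(l <- perms d.+1) g (desl l))%R.
Proof.
transitivity (\sum_(s : 'S_d.+1) g (desl (lst s)))%R.
  by apply: eq_bigr => s _; rewrite descents_lst.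
rewrite -(big_map (@lst d.+1) xpredT (fun l => g (desl l))).
apply: perm_big.
have u1 : uniq (map (@lst d.+1) (index_enum {perm 'I_d.+1})).
  by rewrite (map_inj_uniq (@lst_inj _)) index_enum_uniq.
have sub : {subset map (@lst d.+1) (index_enum {perm 'I_d.+1}) <= perms d.+1}.
  by move=> l /mapP [s _ ->]; apply: perms_mem; apply: lst_perm.
have hs : size (perms d.+1) <= size (map (@lst d.+1) (index_enum {perm 'I_d.+1})).
  by rewrite size_map size_index_enum_perm size_perms.
have [_ e] := uniq_min_size u1 sub hs.
by apply: uniq_perm => //; apply: perms_uniq.
Qed.

End Comb.

Lemma eqm_sum_in N (I : eqType) (r : seq I) (F G : I -> {poly rat}) :
  (forall i, i \in r -> eqm N (F i) (G i)) ->
  eqm N (\sum_(i <- r) F i) (\sum_(i <- r) G i).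
Proof. by move=> h k hk; rewrite !coef_sum; apply: eq_big_seq => i hi; apply: h. Qed.

Definition Mp N n := \sum_(l <- perms n) Ep N (desl l)%:R.
Definition Gp N n : {poly rat} := (n`!)%:R * (U N ^+ n.+1 * F N).
Definition op N n (P : {poly rat}) := (1 + n%:R * E1 N) * P + (1 - E1 N) * P^`().

Lemma opB N n P Q : op N n (P - Q) = op N n P - op N n Q.
Proof. by rewrite /op derivB; ring. Qed.

Lemma op_sum N n (I : Type) (r : seq I) (f : I -> {poly rat}) :
  op N n (\sum_(i <- r) f i) = \sum_(i <- r) op N n (f i).
Proof.
elim: r => [|a r IH]; first by rewrite !big_nil /op deriv0; ring.
by rewrite !big_cons -IH /op derivD; ring.
Qed.

Lemma natr_deriv k : ((k%:R : {poly rat})^`()) = 0.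
Proof. by rewrite -polyC_natr derivC. Qed.

Lemma Mp_rec N n : eqm N.-1 (Mp N n.+1) (op N n (Mp N n)).
Proof.
rewrite /Mp permsS big_allpairs_dep /= op_sum.
apply: eqm_sum_in => l hl.
have [ul sl ml] := @perms_prop _ _ hl.
have hD : (desl l <= n)%N by have := @cnt_des l ul; rewrite sl; lia.
have -> : \sum_(p <- iota 0 n.+1) Ep N (desl (ins p n l))%:R =
          \sum_(p < n.+1) Ep N (desl (ins p n l))%:R.
  by rewrite -[iota 0 n.+1]/(index_iota 0 n.+1) big_mkord.
have := @sum_ins _ (fun c => Ep N c%:R) n l ul ml; rewrite sl => ->.
set D := desl l; set c : rat := D%:R.
rewrite -[Ep N c *+ _]mulr_natr -[Ep N _ *+ (n - D)]mulr_natr natrB // mulrS.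
have -> : ((D.+1)%:R : rat) = 1 + c by rewrite mulrS.
have hE : eqm N (E1 N * Ep N c) (Ep N (1 + c)).
  exact: eqm_trans (eqmM (E1_Ep N) (eqm_refl _ _)) (Ep_mul N 1 c).
apply: eqm_trans (_ : eqm _ _ (Ep N c * (1 + D%:R) + (E1 N * Ep N c) * (n%:R - D%:R))) _.
  apply: eqmD (eqm_refl _ _) (eqmM _ (eqm_refl _ _)).
  exact: eqm_le (leq_pred N) (eqm_sym hE).
have -> : Ep N c * (1 + D%:R) + (E1 N * Ep N c) * (n%:R - D%:R) =
   (1 + n%:R * E1 N) * Ep N c + (1 - E1 N) * (c%:P * Ep N c).
  rewrite /c polyC_natr; ring.
apply: eqmD (eqm_refl _ _) (eqmM (eqm_refl _ _) _).
exact: eqm_sym (Ep_deriv N c).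
Qed.

Lemma Gp_rec N n : eqm N.-1 (Gp N n.+1) (op N n (Gp N n)).
Proof.
set u := U N; set f := F N; set e := E1 N; set c : {poly rat} := (n`!)%:R.
have hW : eqm N.-1 ('X * u^`()) (e - u) := eqm_le (leq_pred N) (XU' N).
have hV : eqm N.-1 f^`() (- f).
  have := Ep_deriv N (-1); rewrite -F_Ep polyCN polyC1 mulN1r; exact.
have -> : op N n (Gp N n) =
  (1 + n%:R * e) * c * (u * u ^+ n) * f - c * (n%:R + 1) * (u * u ^+ n) * ('X * u^`()) * f
  - c * 'X * (u * (u * u ^+ n)) * f^`().
  rewrite /op /Gp -/c -/u -/f derivM natr_deriv mul0r add0r derivM deriv_exp /=.
  rewrite -[_ *+ n.+1]mulr_natr !exprS /e /E1 -/u; ring.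
have -> : Gp N n.+1 =
  (1 + n%:R * e) * c * (u * u ^+ n) * f - c * (n%:R + 1) * (u * u ^+ n) * (e - u) * f
  - c * 'X * (u * (u * u ^+ n)) * (- f).
  rewrite /Gp -/u -/f factS natrM -/c !exprS /e /E1 -/u; ring.
apply: eqmB (eqmB (eqm_refl _ _) (eqmM (eqmM (eqm_refl _ _) (eqm_sym hW)) (eqm_refl _ _)))
  (eqmM (eqm_refl _ _) (eqm_sym hV)).
Qed.

Lemma op_X N n D : (0 < N)%N -> eqm n.+1 D 0 -> eqm n.+2 (op N n D) 0.
Proof.
move=> hN /eqm0X [q ->]; apply/eqm0X.
have h1 : eqm 1 (1 - U N) 0.
  move=> k; rewrite ltnS leqn0 => /eqP ->.
  by rewrite coefB coef1 coef0 /U /T coef_poly hN /expm1_div_z (factS 0) fact0 muln1 divr1 subrr.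
case/eqm0X: h1 => w; rewrite expr1 => hw.
have hu : U N = 1 - 'X * w by rewrite -hw; ring.
exists ((n%:R + 1) * w * q + n%:R * U N * q - U N * q^`()).
rewrite /op /E1 derivM derivXn /= -[_ *+ n.+1]mulr_natr !exprS hu; ring.
Qed.

Lemma base N : (0 < N)%N -> eqm 1 (Mp N 0 - Gp N 0) 0.
Proof.
move=> hN k; rewrite ltnS leqn0 => /eqP ->.
rewrite coefB coef0 /Mp /= big_seq1 /Gp fact0 mul1r expr1 coefM big_ord1 /U /F /T.
rewrite !coef_poly hN /expm1_div_z /exp_neg /= (factS 0) fact0 muln1.
by rewrite subn0 !expr0 !divr1 subrr.
Qed.

Lemma main N n : (n.+1 < N)%N -> eqm n.+1 (Mp N n - Gp N n) 0.
Proof.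
elim: n => [|n IH] h; first by apply: base; apply: ltn_trans h.
have hD := IH (ltnW h).
have hN : (0 < N)%N by apply: leq_ltn_trans h.
have h2 := @op_X N n _ hN hD; rewrite opB in h2.
apply: (eqm_trans _ h2).
apply: eqm_le (_ : n.+2 <= N.-1)%N _; first by clear -h; case: N h.
exact: eqmB (Mp_rec N n) (Gp_rec N n).
Qed.

Lemma moments d k : (k <= d.+1)%N ->
  \sum_(l <- perms d.+1) ((desl l)%:R ^+ k : rat) = (d.+1)`!%:R * Epoly k d.
Proof.
move=> hk.
pose N := d.+3.
have hkN : (k < N)%N by rewrite /N ltnS ltnW.
have := @main N d.+1 (ltnSn _) k hk.
rewrite coefB coef0 => /eqP; rewrite subr_eq0 => /eqP.
rewrite /Mp /Gp coef_sum -polyC_natr coefCM (@Epoly_poly N) // addn2.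
under eq_bigr do rewrite coef_Ep hkN.
rewrite -mulr_suml => e.
have := congr1 (fun x => x * k`!%:R) e; rewrite divfK ?fact_neq0 // => ->.
ring.
Qed.

Lemma part3 d k : (k <= d.+1)%N -> Eprime k d = centered_moment d k.
Proof.
move=> hk.
rewrite /centered_moment (sum_S _ d (fun c => (c%:R - d%:R / 2) ^+ k)).
have ee : forall l, ((desl l)%:R - d%:R / 2 : rat) ^+ k =
    \sum_(i < k.+1) 'C(k, i)%:R * (desl l)%:R ^+ i * (- (d%:R / 2)) ^+ (k - i).
  move=> l; rewrite addrC exprDn; apply: eq_bigr => i _.
  by rewrite -mulr_natl; ring.
rewrite (eq_bigr _ (fun l _ => ee l)) exchange_big mulr_suml /Eprime.
apply: eq_bigr => i _.
rewrite -mulr_suml -mulr_sumr moments; last by apply: leq_trans hk; rewrite -ltnS.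
have := fact_neq0 d.+1 => h; field.
exact: h.
Qed.

Theorem corollary3p13 :
  (forall a b k : nat,
      Eprime k (a + b + 2) =
      \sum_(i < k.+1) 'C(k, i)%:R * Eprime i a * Eprime (k - i) b) /\
  (forall d k : nat,
      Eprime k d / k`!%:R = spow sinhc_half (d + 2) k) /\
  (forall d k : nat, (k <= d.+1)%N ->
      Eprime k d = centered_moment d k).
Proof.
split; first exact: part1.
split; first exact: part2.
exact: part3.
Qed.
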